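(* Assume (A1) and (A2) at time $k$, let $\phi$ satisfy (A3) at time $k$, and suppose that for a constant $\widetilde M_{k|k-1}$ independent of $N$, $\mathbb{E}|\langle\widetilde\pi^N_{k|k-1},\beta_k|\phi|^4\rangle-\langle\pi_{k|k-1},\beta_k|\phi|^4\rangle|\le\widetilde M_{k|k-1}\|\beta_k\|_\infty\|\phi\|^4_{k-1,4}$. Then $$\mathbb{E}\,\langle\widetilde\pi^N_{k|k},|\phi|^4\rangle\le\widetilde M_{k|k}\|\phi\|^4_{k,4},\qquad \widetilde M_{k|k}=3\max\Big\{\frac{2\|\beta_k|\phi|^4\|_\infty\|\beta_k\|_\infty}{\gamma_k\langle\pi_{k|k-1},\beta_k\rangle},\frac{\widetilde M_{k|k-1}\|\beta_k\|_\infty}{\langle\pi_{k|k-1},\beta_k\rangle},1\Big\}.$$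
   Context: Notation: for a measure $\nu$ and function $\phi$, $\langle\nu,\phi\rangle=\int\phi\,d\nu$; $\|f\|_\infty$ is the supremum norm. Fixed data: integer $k\ge1$; deterministic vectors $\mathbf{x}_0,\dots,\mathbf{x}_k\in\mathbb{R}^{n_x}$ (defender's true states) and $\mathbf{a}_1,\dots,\mathbf{a}_k\in\mathbb{R}^{n_a}$ (defender's observations); a conditional density $\rho(\mathbf{y}|\mathbf{x})$ in $\mathbf{y}\in\mathbb{R}^{n_y}$; a conditional density $\beta(\mathbf{a}|\hat{\mathbf{x}})$ in $\mathbf{a}\in\mathbb{R}^{n_a}$, $\hat{\mathbf{x}}\in\mathbb{R}^{n_x}$; measurable maps $T_s:\mathbb{R}^{n_x}\times\mathbb{R}^{n_y}\to\mathbb{R}^{n_x}$, $s=1,\dots,k$ (the attacker's forward-filter update $\hat{\mathbf{x}}_s=T_s(\hat{\mathbf{x}}_{s-1},\mathbf{y}_s)$). Write $\beta_s(\hat{\mathbf{x}},\mathbf{y})=\beta(\mathbf{a}_s|\hat{\mathbf{x}})$ and, for a function $\psi$ of $(\hat{\mathbf{x}},\mathbf{y})$, $(\delta_T\rho\psi)_s(\hat{\mathbf{x}}',\mathbf{y}')=\int\psi(T_s(\hat{\mathbf{x}}',\mathbf{y}),\mathbf{y})\rho(\mathbf{y}|\mathbf{x}_s)\,d\mathbf{y}$ (abbreviated $\delta_T\rho\psi$). Optimal inverse filter: probability measures on $\mathbb{R}^{n_x}\times\mathbb{R}^{n_y}$ defined from $\pi_{0|0}=\pi_0$ by $\langle\pi_{s|s-1},\psi\rangle=\langle\pi_{s-1|s-1},\delta_T\rho\psi\rangle$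 and $\langle\pi_{s|s},\psi\rangle=\langle\pi_{s|s-1},\beta_s\psi\rangle/\langle\pi_{s|s-1},\beta_s\rangle$. I-PF with $N$ particles and thresholds $\gamma_s>0$: draw $\hat{\mathbf{x}}^i_0$ i.i.d. from a given distribution $\widetilde\pi^x_0$ and, independently, $\mathbf{y}^i_0$ i.i.d. from $\rho(\cdot|\mathbf{x}_0)$, $i=1,\dots,N$; $\pi_0$ is the (product) law of $(\hat{\mathbf{x}}^i_0,\mathbf{y}^i_0)$ and $\pi^N_{0|0}=\frac1N\sum_i\delta_{(\hat{\mathbf{x}}^i_0,\mathbf{y}^i_0)}$. For $s\ge1$, given particles $(\hat{\mathbf{x}}^i_{s-1},\mathbf{y}^i_{s-1})$: (1) draw conditionally i.i.d. $\bar{\mathbf{y}}^i_s\sim\rho(\cdot|\mathbf{x}_s)$ and set $\bar{\hat{\mathbf{x}}}^i_s=T_s(\hat{\mathbf{x}}^i_{s-1},\bar{\mathbf{y}}^i_s)$; (2) if $\frac1N\sum_i\beta(\mathbf{a}_s|\bar{\hat{\mathbf{x}}}^i_s)\ge\gamma_s$, accept and set $(\tilde{\hat{\mathbf{x}}}^i_s,\tilde{\mathbf{y}}^i_s)=(\bar{\hat{\mathbf{x}}}^i_s,\bar{\mathbf{y}}^i_s)$; otherwise redo (1) independently; (3) set $\widetilde\pi^N_{s|s-1}=\frac1N\sum_i\delta_{(\tilde{\hat{\mathbf{x}}}^i_s,\tilde{\mathbf{y}}^i_s)}$, weights $\omega^i_s=\beta(\mathbf{a}_s|\tilde{\hat{\mathbf{x}}}^i_s)/\sum_j\beta(\mathbf{a}_s|\tilde{\hat{\mathbf{x}}}^j_s)$,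 $\widetilde\pi^N_{s|s}=\sum_i\omega^i_s\delta_{(\tilde{\hat{\mathbf{x}}}^i_s,\tilde{\mathbf{y}}^i_s)}$; (4) draw $N$ conditionally i.i.d. $(\hat{\mathbf{x}}^i_s,\mathbf{y}^i_s)\sim\widetilde\pi^N_{s|s}$ and set $\pi^N_{s|s}=\frac1N\sum_i\delta_{(\hat{\mathbf{x}}^i_s,\mathbf{y}^i_s)}$. Expectations $\mathbb{E}$ are over the particle randomness. Norm: $\|\phi\|_{s,4}=\max\{1,\max_{0\le r\le s}\langle\pi_{r|r},|\phi|^4\rangle^{1/4}\}$. Assumptions: (A1) for $s=1,\dots,k$, $\langle\pi_{s|s-1},\beta_s\rangle>0$ and $0<\gamma_s<\langle\pi_{s|s-1},\beta_s\rangle$. (A2) $\beta(\mathbf{a}_s|\cdot)$ and $\rho(\cdot|\mathbf{x}_s)$ are bounded for $s=1,\dots,k$. (A3) for $s=1,\dots,k$, $\sup_{(\hat{\mathbf{x}},\mathbf{y})}|\phi(\hat{\mathbf{x}},\mathbf{y})|^4\beta(\mathbf{a}_s|\hat{\mathbf{x}})<\infty$. By construction (step (2)), $\langle\widetilde\pi^N_{k|k-1},\beta_k\rangle\ge\gamma_k$. *)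

(* Defs.v *)
From HB Require Import structures.
From mathcomp Require Import all_boot all_order all_algebra.
From mathcomp Require Import all_classical all_reals all_analysis.
Set Implicit Arguments. Unset Strict Implicit. Unset Printing Implicit Defensive.
Import Order.TTheory GRing.Theory Num.Theory.
Local Open Scope classical_set_scope.
Local Open Scope ring_scope.

(* Euclidean space R^n, as n-tuples of reals with the product (= Borel) sigma-algebra. *)
Notation Rn R n := (n.-tuple (R : realType)).

(* Lebesgue integral over R^n of an extended-real function, computed as the
   iterated one-dimensional Lebesgue integral (equal to the integral against
   the n-dimensional Lebesgue measure for nonnegative measurable functions,
   by Tonelli). *)
Fixpoint lebint {R : realType} (n : nat) : (Rn R n -> \bar R) -> \bar R :=
  match n with
  | 0 => fun f => f [tuple]
  | n'.+1 => fun f =>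
      (\int[@lebesgue_measure R]_(y in [set: R]) lebint (fun t => f (cons_tuple y t)))%E
  end.

Definition is_density {R : realType} (n : nat) (p : Rn R n -> R) : Prop :=
  measurable_fun [set: Rn R n] p /\ (forall y, 0 <= p y) /\
  lebint (fun y => (p y)%:E) = 1%E.

Definition pair_int {d} {T : measurableType d} {R : realType}
  (nu : probability T R) (f : T -> \bar R) : \bar R :=
  (\int[nu]_x f x)%E.

Definition supnorm {T : Type} {R : realType} (f : T -> R) : \bar R :=
  ereal_sup [set (`|f x|)%:E | x in [set: T]].

Definition norm4 {d} {T : measurableType d} {R : realType}
  (pif : nat -> probability T R) (phi : T -> R) (s : nat) : \bar R :=
  maxe 1%E (\big[maxe/-oo%E]_(r < s.+1)
               poweR (pair_int (pif r) (fun z => (`|phi z| ^+ 4)%:E)) (4^-1)).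

(* Main.v *)
Require Import Defs.
From HB Require Import structures.
From mathcomp Require Import all_boot all_order all_algebra.
From mathcomp Require Import all_classical all_reals all_analysis.
From mathcomp Require Import measurable_realfun.
From mathcomp Require Import ring lra.
Import Order.TTheory GRing.Theory Num.Theory.
Import numFieldNormedType.Exports.
Local Open Scope classical_set_scope.
Local Open Scope ring_scope.

Lemma supnorm_ge {T : Type} {R : realType} (f : T -> R) x :
  ((`|f x|)%:E <= supnorm f)%E.
Proof. by apply: ereal_sup_ubound; exists x. Qed.

Lemma supnorm_fin {T : Type} {R : realType} (f : T -> R) (x0 : T) :
  (supnorm f < +oo)%E ->
  supnorm f = (fine (supnorm f))%:E /\ (forall x, f x <= fine (supnorm f)).
Proof.
move=> hf.
have h0 : (0 <= supnorm f)%E by apply: le_trans (supnorm_ge f x0).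
have fk : (fine (supnorm f))%:E = supnorm f.
  by apply: fineK; rewrite ge0_fin_numE.
split; first by rewrite fk.
move=> x; have := supnorm_ge f x; rewrite -fk lee_fin => h.
exact: le_trans (ler_norm _) h.
Qed.

Lemma ptwise {R : realType} (C Bw a S B g : R) : 0 < g -> g <= Bw ->
  0 <= C -> C <= S -> 0 < a -> a <= B -> C / Bw <= S * B / (g * a) + C / a.
Proof.
move=> g0 gB C0 CS a0 aB.
have Bw0 : 0 < Bw by apply: lt_le_trans gB.
have S0 : 0 <= S by apply: le_trans CS.
have [aBw|Bwa] := leP a Bw.
  apply: ler_wpDl; first by apply: divr_ge0; [apply: mulr_ge0; lra|apply: mulr_ge0; lra].
  by apply: ler_wpM2l => //; rewrite lef_pV2 ?posrE.
have -> : C / Bw = (C * a) / (Bw * a) by field; apply/andP; split; lra.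
apply: ler_wpDr; first by apply: divr_ge0; lra.
apply: ler_pM; [nra|by rewrite invr_ge0; nra|nra|].
by rewrite lef_pV2 ?posrE; nra.
Qed.

Lemma final {R : realType} (S B g ar cr Mp mr nr ir : R) : 0 <= S -> 0 <= B ->
  0 < g -> 0 < ar -> 1 <= mr -> mr <= nr -> cr / ar <= nr ^+ 4 ->
  ir <= Mp * B * mr ^+ 4 ->
  S * B / (g * ar) + cr / ar + ar^-1 * ir <=
  3 * Num.max (Num.max (2 * S * B / (g * ar)) (Mp * B / ar)) 1 * nr ^+ 4.
Proof.
move=> S0 B0 g0 a0 m1 mn qn ih.
set u := 2 * S * B / (g * ar); set v := Mp * B / ar.
set M := Num.max (Num.max u v) 1.
have uM : u <= M by rewrite !le_max lexx.
have vM : v <= M by rewrite !le_max lexx orbT.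
have M1 : 1 <= M by rewrite le_max lexx orbT.
have Q1 : 1 <= mr ^+ 4 by apply: exprn_ege1.
have QP : mr ^+ 4 <= nr ^+ 4 by apply: lerXn2r => //; rewrite nnegrE; lra.
have u0 : 0 <= u by apply: divr_ge0; [apply: mulr_ge0 => //; apply: mulr_ge0 => //|apply: mulr_ge0]; lra.
have eu : S * B / (g * ar) = u / 2 by rewrite /u; field; apply/andP; split; rewrite gt_eqF //; apply: mulr_gt0.
have MP : M <= M * nr ^+ 4 by rewrite ler_peMr //; lra.
have PMP : nr ^+ 4 <= M * nr ^+ 4 by rewrite ler_peMl //; lra.
have t3 : ar^-1 * ir <= M * nr ^+ 4.
  apply: le_trans (_ : v * mr ^+ 4 <= _).
    have -> : v * mr ^+ 4 = ar^-1 * (Mp * B * mr ^+ 4) by rewrite /v; ring.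
    by rewrite ler_pM2l ?invr_gt0.
  have [v0|v0] := leP 0 v.
    apply: le_trans (_ : v * nr ^+ 4 <= _); first by rewrite ler_wpM2l.
    by rewrite ler_wpM2r //; lra.
  apply: le_trans (_ : 0 <= _); first by nra.
  by apply: mulr_ge0; lra.
rewrite eu -mulrA; lra.
Qed.
Theorem claim2
  (R : realType) (nx ny na : nat) (k : nat)
  (* defender's true states x_0..x_k and observations a_1..a_k *)
  (xs : nat -> Rn R nx) (as_ : nat -> Rn R na)
  (* rho (y | x) and beta (a | xhat) *)
  (rho : Rn R ny -> Rn R nx -> R) (beta : Rn R na -> Rn R nx -> R)
  (* attacker's forward-filter updates T_s *)
  (T : nat -> (Rn R nx * Rn R ny)%type -> Rn R nx)
  (* initial distribution of xhat_0 *)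
  (pix0 : probability (Rn R nx) R)
  (* optimal inverse filter: pif s = pi_{s|s}, pip s = pi_{s|s-1} *)
  (pif pip : nat -> probability ((Rn R nx * Rn R ny)%type) R)
  (gamma_k : R) (phi : (Rn R nx * Rn R ny)%type -> R) (Mp : R)
  (* I-PF at time k: probability space of the particle randomness and the
     N accepted predicted particles (tilde xhat^i_k, tilde y^i_k) *)
  (dO : measure_display) (Omega : measurableType dO) (P : probability Omega R)
  (N : nat) (part : 'I_N -> Omega -> (Rn R nx * Rn R ny)%type) :
  (1 <= k)%N ->
  (* rho and beta are (jointly measurable) conditional densities; T_s measurable *)
  measurable_fun [set: (Rn R ny * Rn R nx)%type] (fun p => rho p.1 p.2) ->
  measurable_fun [set: (Rn R na * Rn R nx)%type] (fun p => beta p.1 p.2) ->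
  (forall x, is_density (fun y => rho y x)) ->
  (forall xh, is_density (fun a => beta a xh)) ->
  (forall s, measurable_fun [set: (Rn R nx * Rn R ny)%type] (T s)) ->
  (* pi_{0|0} = pi_0 = pix0 (x) rho(.|x_0) *)
  (forall psi : (Rn R nx * Rn R ny)%type -> R,
      measurable_fun [set: (Rn R nx * Rn R ny)%type] psi -> (forall z, 0 <= psi z) ->
      pair_int (pif 0%N) (fun z => (psi z)%:E)
      = (\int[pix0]_xh lebint (fun y => (psi (xh, y) * rho y (xs 0%N))%:E))%E) ->
  (* prediction step: <pi_{s|s-1}, psi> = <pi_{s-1|s-1}, delta_T rho psi> *)
  (forall s, (1 <= s <= k)%N ->
    forall psi : (Rn R nx * Rn R ny)%type -> R,
      measurable_fun [set: (Rn R nx * Rn R ny)%type] psi -> (forall z, 0 <= psi z) ->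
      pair_int (pip s) (fun z => (psi z)%:E)
      = pair_int (pif s.-1)
          (fun z => lebint (fun y => (psi (T s (z.1, y), y) * rho y (xs s))%:E))) ->
  (* update step: <pi_{s|s}, psi> = <pi_{s|s-1}, beta_s psi> / <pi_{s|s-1}, beta_s> *)
  (forall s, (1 <= s <= k)%N ->
    forall psi : (Rn R nx * Rn R ny)%type -> R,
      measurable_fun [set: (Rn R nx * Rn R ny)%type] psi -> (forall z, 0 <= psi z) ->
      pair_int (pif s) (fun z => (psi z)%:E)
      = (pair_int (pip s) (fun z => (beta (as_ s) z.1 * psi z)%:E)
         / pair_int (pip s) (fun z => (beta (as_ s) z.1)%:E))%E) ->
  (* (A1) at time k *)
  (0 < pair_int (pip k) (fun z => (beta (as_ k) z.1)%:E))%E ->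
  0 < gamma_k ->
  (gamma_k%:E < pair_int (pip k) (fun z => (beta (as_ k) z.1)%:E))%E ->
  (* (A2) at time k *)
  (supnorm (beta (as_ k)) < +oo)%E ->
  (supnorm (fun y => rho y (xs k)) < +oo)%E ->
  (* (A3) at time k, for a measurable test function phi *)
  measurable_fun [set: (Rn R nx * Rn R ny)%type] phi ->
  (supnorm (fun z => (`|phi z| ^+ 4 * beta (as_ k) z.1)%R) < +oo)%E ->
  (* the I-PF particles: N >= 1, measurable, accepted by the threshold test *)
  (0 < N)%N ->
  (forall i, measurable_fun [set: Omega] (part i)) ->
  (forall w, gamma_k <= N%:R^-1 * \sum_(i < N) beta (as_ k) (part i w).1) ->
  (* hypothesis on the predicted empirical measure tilde pi^N_{k|k-1} *)
  (\int[P]_w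
      `| (N%:R^-1 * \sum_(i < N)
             beta (as_ k) (part i w).1 * `|phi (part i w)| ^+ 4)%R%:E
         - pair_int (pip k) (fun z => (beta (as_ k) z.1 * `|phi z| ^+ 4)%:E) |
    <= Mp%:E * supnorm (beta (as_ k)) * (norm4 pif phi k.-1) ^+ 4)%E ->
  (* conclusion: E <tilde pi^N_{k|k}, |phi|^4> <= tilde M_{k|k} ||phi||^4_{k,4} *)
  (\int[P]_w
      ((\sum_(i < N) beta (as_ k) (part i w).1 * `|phi (part i w)| ^+ 4)
       / (\sum_(j < N) beta (as_ k) (part j w).1))%R%:E
    <= 3%:E * maxe
          (maxe ((2%:E * supnorm (fun z => (beta (as_ k) z.1 * `|phi z| ^+ 4)%R)
                    * supnorm (beta (as_ k)))
                 / (gamma_k%:E * pair_int (pip k) (fun z => (beta (as_ k) z.1)%:E)))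
                (Mp%:E * supnorm (beta (as_ k))
                 / pair_int (pip k) (fun z => (beta (as_ k) z.1)%:E)))
          1
       * (norm4 pif phi k) ^+ 4)%E.
Proof.
move=> hk mrho mbeta drho dbeta mT h0 hpred hupd ha0 hg0 hga hB hrho mphi hA3
  hN mpart hthr hM.
case: k hk hpred hupd ha0 hga hB hrho hA3 hthr hM => [//|k] _
  hpred hupd ha0 hga hB hrho hA3 hthr hM.
set bk := beta (as_ k.+1) in ha0 hga hB hA3 hthr hM *.
pose x0 : Rn R nx := nseq_tuple nx 0.
pose z0 : (Rn R nx * Rn R ny)%type := (nseq_tuple nx 0, nseq_tuple ny 0).
have b0 : forall xh, 0 <= bk xh := fun xh => (dbeta xh).2.1 (as_ k.+1).
have mb : measurable_fun setT bk.
  by have := measurable_fun_pair2 (as_ k.+1) mbeta.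
have mb1 : measurable_fun setT (fun z : (Rn R nx * Rn R ny)%type => bk z.1).
  exact: measurableT_comp mb measurable_fst.
have mphi4 : measurable_fun setT (fun z : (Rn R nx * Rn R ny)%type => `|phi z| ^+ 4).
  apply: (@measurableT_comp _ _ _ _ _ _ (fun x : R => x ^+ 4)) => //.
  exact: measurableT_comp.
have [eB bB] := supnorm_fin _ x0 hB.
set B := fine (supnorm bk) in eB bB.
have [eS Sb] := supnorm_fin _ z0 hA3.
set S := fine _ in eS Sb.
have eS' : supnorm (fun z => bk z.1 * `|phi z| ^+ 4) = S%:E.
  by rewrite -eS; congr supnorm; apply/funext => z; rewrite mulrC.
have ma : measurable_fun setT (fun z : (Rn R nx * Rn R ny)%type => (bk z.1)%:E).
  exact: (measurable_EFinP _ _).2 mb1.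
have mc : measurable_fun setT
    (fun z : (Rn R nx * Rn R ny)%type => (bk z.1 * `|phi z| ^+ 4)%:E).
  by apply: (measurable_EFinP _ _).2; apply: measurable_funM.
have intle (f : (Rn R nx * Rn R ny)%type -> R) (M : R) :
    measurable_fun setT (fun z => (f z)%:E) ->
    (forall z, 0 <= f z) -> (forall z, f z <= M) ->
    (0 <= pair_int (pip k.+1) (fun z => (f z)%:E) <= M%:E)%E.
  move=> mf f0 fM; apply/andP; split.
    by apply: integral_ge0 => z _; rewrite lee_fin.
  rewrite /pair_int.
  apply: (@le_trans _ _ (\int[pip k.+1]_(z in setT) (cst M%:E) z))%E.
    apply: ge0_le_integral => //; first by move=> z _; rewrite lee_fin.
    by move=> z _; rewrite lee_fin.
  rewrite integral_cst // [X in (_ * X)%E](_ : _ = 1%E) ?mule1 //; exact: probability_setT.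
have /andP[a0' aB'] := intle _ B ma (fun z => b0 z.1) (fun z => bB z.1).
move: ha0 hga a0' aB'.
set ae := pair_int (pip k.+1) _ => ha0 hga a0' aB'.
have ea : ae = (fine ae)%:E.
  by rewrite fineK // ge0_fin_numE // (le_lt_trans aB') ?ltry.
set ar := fine ae in ea.
have [c0' cS'] : (0 <= pair_int (pip k.+1) (fun z => (bk z.1 * `|phi z| ^+ 4)%:E)
    /\ pair_int (pip k.+1) (fun z => (bk z.1 * `|phi z| ^+ 4)%:E) <= S%:E)%E.
  apply/andP; apply: intle => // z; first by apply: mulr_ge0.
  by rewrite mulrC.
move: hM c0' cS'.
set ce := pair_int (pip k.+1) _ => hM c0' cS'.
have ec : ce = (fine ce)%:E.
  by rewrite fineK // ge0_fin_numE // (le_lt_trans cS') ?ltry.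
set cr := fine ce in ec.
have ar0 : 0 < ar by rewrite -lte_fin -ea.
have arB : ar <= B by rewrite -lee_fin -ea.
have cr0 : 0 <= cr by rewrite -lee_fin -ec.
have crS : cr <= S by rewrite -lee_fin -ec.
have hq : pair_int (pif k.+1) (fun z => (`|phi z| ^+ 4)%:E) = (cr / ar)%:E.
  have hk1 : (1 <= k.+1 <= k.+1)%N by rewrite leqnn.
  rewrite (hupd k.+1 hk1 (fun z => `|phi z| ^+ 4) mphi4); last first.
    by move=> z; exact: exprn_ge0.
  by rewrite -/bk -/ae -/ce ec ea inver gt_eqF // EFinM.
have hn : norm4 pif phi k.+1 = maxe 1%E (maxe
   (\big[maxe/-oo%E]_(i < k.+1) poweR (pair_int (pif i)
         (fun z => (`|phi z| ^+ 4)%:E)) 4^-1) ((cr / ar) `^ 4^-1)%:E).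
  by rewrite /norm4 big_ord_recr /= hq poweR_EFin.
change (norm4 pif phi k.+1.-1) with (norm4 pif phi k) in hM.
rewrite hn; rewrite /norm4 in hM.
set X := \big[maxe/-oo%E]_(i < k.+1) _ in hM *.
clearbody X.
rewrite eS' eB ea in hM *.
rewrite ec in hM.
have q0 : 0 <= cr / ar by apply: divr_ge0 => //; exact: ltW.
have q4 : ((cr / ar) `^ 4^-1) ^+ 4 = cr / ar.
  rewrite -powR_mulrn ?powR_ge0 // -powRrM mulVf ?powRr1 //.
have qn : forall nr, (cr / ar) `^ 4^-1 <= nr -> cr / ar <= nr ^+ 4.
  move=> nr hnr; rewrite -q4; apply: lerXn2r => //; rewrite ?nnegrE ?powR_ge0 //.
  exact: le_trans (powR_ge0 _ _) hnr.
suff main : forall mr nr : R, 1 <= mr -> mr <= nr -> cr / ar <= nr ^+ 4 ->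
  (\int[P]_w `|(N%:R^-1 * \sum_(i < N) bk (part i w).1 * `|phi (part i w)| ^+ 4)%:E
      - cr%:E| <= Mp%:E * B%:E * mr%:E ^+ 4)%E ->
  (\int[P]_w ((\sum_(i < N) bk (part i w).1 * `|phi (part i w)| ^+ 4)
       / \sum_(j < N) bk (part j w).1)%:E <=
   3%:E * maxe (maxe (2%:E * S%:E * B%:E / (gamma_k%:E * ar%:E))
     (Mp%:E * B%:E / ar%:E)) 1 * nr%:E ^+ 4)%E.
  case: X hM => [x| |] hM.
  - rewrite maxA -!EFin_max in hM *; apply: (main (Num.max 1 x)) => //.
    + by rewrite le_max lexx.
    + by rewrite le_max lexx.
    + by apply: qn; rewrite le_max lexx orbT.
  - rewrite maxye maxey (_ : ((+oo : \bar R) ^+ 4 = +oo)%E); last first.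
      by rewrite !expeS expe0 mule1 !mulyy.
    rewrite muleC gt0_mulye ?leey //.
    apply: mule_gt0; first by rewrite lte_fin.
    by rewrite lt_max lte01 orbT.
  - rewrite maxNye -EFin_max maxeNy in hM *; apply: (main 1) => //.
    + by rewrite le_max lexx.
    + by apply: qn; rewrite le_max lexx orbT.
move=> mr nr m1 mn qn4 hM'.
have N0 : 0 < N%:R :> R by rewrite ltr0n.
pose s1 w := \sum_(i < N) bk (part i w).1 * `|phi (part i w)| ^+ 4.
pose s2 w := \sum_(j < N) bk (part j w).1.
pose Cw w := N%:R^-1 * s1 w.
have mt1 i : measurable_fun setT (fun w => bk (part i w).1).
  exact: measurableT_comp mb1 (mpart i).
have mt2 i : measurable_fun setT (fun w => `|phi (part i w)| ^+ 4).
  exact: measurableT_comp mphi4 (mpart i).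
have ms1 : measurable_fun setT s1.
  by apply: measurable_sum => i; apply: measurable_funM.
have ms2 : measurable_fun setT s2 by apply: measurable_sum.
have mCw : measurable_fun setT Cw by apply: measurable_funM.
pose g' := N%:R * gamma_k.
have g'0 : 0 < g' by apply: mulr_gt0.
have s2g w : g' <= s2 w.
  by rewrite /g' -ler_pdivlMl //; exact: hthr w.
have hcont : continuous (fun x : R => (Num.max x g')^-1).
  move=> x; apply: (continuousV (s := fun y : R => Num.max y g') (x := x)).
    by apply: lt0r_neq0; apply: lt_le_trans g'0 _; rewrite le_max lexx orbT.
  by apply: continuous_max; [exact: cvg_id|exact: cvg_cst].
have mrat : measurable_fun setT (fun w => s1 w / s2 w).
  have -> : (fun w => s1 w / s2 w) = (fun w => s1 w * (Num.max (s2 w) g')^-1).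
    apply/funext => w; congr (_ * _ ^-1).
    by apply/esym/max_idPl; exact: s2g.
  apply: measurable_funM => //.
  exact: measurableT_comp (continuous_measurable_fun hcont) ms2.
have Cw0 w : 0 <= Cw w.
  apply: mulr_ge0; first by rewrite invr_ge0 ltW.
  by apply: sumr_ge0 => i _; apply: mulr_ge0 => //; exact: exprn_ge0.
have CwS w : Cw w <= S.
  rewrite /Cw ler_pdivrMl // /s1.
  have -> : N%:R * S = \sum_(i < N) S by rewrite sumr_const card_ord mulr_natl.
  by apply: ler_sum => i _; rewrite mulrC.
pose A0 := S * B / (gamma_k * ar).
have pw w : s1 w / s2 w <= (A0 + cr / ar) + ar^-1 * `|Cw w - cr|.
  have -> : s1 w / s2 w = Cw w / (N%:R^-1 * s2 w).
    rewrite /Cw; field; apply/andP; split; first by rewrite gt_eqF.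
    by rewrite gt_eqF // (lt_le_trans g'0).
  apply: le_trans (ptwise _ _ _ _ _ _ hg0 (hthr w) (Cw0 w) (CwS w) ar0 arB) _.
  rewrite -/A0 -addrA lerD2l [ar^-1 * _]mulrC -mulrDl ler_pM2r ?invr_gt0 //.
  by rewrite -lerBlDl ler_norm.
have mabs : measurable_fun setT (fun w => `|Cw w - cr|).
  apply: measurableT_comp => //.
  by apply: measurable_funB => //; exact: measurable_cst.
have eI : (\int[P]_w `|(N%:R^-1 * \sum_(i < N) bk (part i w).1 *
              `|phi (part i w)| ^+ 4)%:E - cr%:E|
          = \int[P]_w (`|Cw w - cr|)%:E)%E.
  by apply: eq_integral => w _; rewrite -EFinB abse_EFin.
rewrite eI -EFin_expe -!EFinM in hM'.
move: hM'; set I := (\int[P]_w (`|Cw w - cr|)%:E)%E => hM'.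
have I0 : (0 <= I)%E by apply: integral_ge0 => w _; rewrite lee_fin.
have eIr : I = (fine I)%:E.
  by rewrite fineK // ge0_fin_numE // (le_lt_trans hM') ?ltry.
pose A1 := A0 + cr / ar.
have S0 : 0 <= S.
  apply: le_trans (Sb z0); apply: mulr_ge0 => //; exact: exprn_ge0.
have B0 : 0 <= B by apply: le_trans (bB x0).
have A10 : 0 <= A1.
  apply: addr_ge0; last exact: divr_ge0 cr0 (ltW ar0).
  by apply: divr_ge0; [exact: mulr_ge0 S0 B0|apply: mulr_ge0; exact: ltW].
apply: (@le_trans _ _ (\int[P]_w (A1 + ar^-1 * `|Cw w - cr|)%:E)%E).
  apply: ge0_le_integral => //.
  - move=> w _; rewrite lee_fin; apply: divr_ge0; apply: sumr_ge0 => i _ //.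
    by apply: mulr_ge0 => //; exact: exprn_ge0.
  - exact: (measurable_EFinP _ _).2 mrat.
  - apply: (measurable_EFinP _ _).2; apply: measurable_funD.
      exact: measurable_cst.
    by apply: measurable_funM => //; exact: measurable_cst.
  - by move=> w _; rewrite lee_fin; exact: pw.
have eJ : (\int[P]_w (A1 + ar^-1 * `|Cw w - cr|)%:E = A1%:E + (ar^-1)%:E * I)%E.
  under eq_integral do rewrite EFinD EFinM.
  rewrite ge0_integralD //.
  - rewrite ge0_integralZl_EFin //.
    + rewrite integral_cst // [X in (_ * X)%E](_ : _ = 1%E) ?mule1 //.
      exact: probability_setT.
    + exact: (measurable_EFinP _ _).2 mabs.
    + by rewrite invr_ge0 ltW.
  - by move=> w _; apply: mule_ge0; rewrite lee_fin // invr_ge0 ltW.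
  - apply: emeasurable_funM; first exact: measurable_cst.
    exact: (measurable_EFinP _ _).2 mabs.
rewrite eJ eIr -EFinM -EFinD.
have e1 : (2%:E * S%:E * B%:E / (gamma_k%:E * ar%:E)
    = (2 * S * B / (gamma_k * ar))%:E)%E.
  by rewrite -!EFinM inver gt_eqF ?mulr_gt0 // -EFinM.
have e2 : (Mp%:E * B%:E / ar%:E = (Mp * B / ar)%:E)%E.
  by rewrite -EFinM inver gt_eqF // -EFinM.
rewrite e1 e2 -!EFin_max -EFin_expe -!EFinM lee_fin.
rewrite eIr lee_fin in hM'.
exact: (@final R S B gamma_k ar cr Mp mr nr (fine I)).

Qed.
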